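(* Let $\lambda \geq 0$, $0\leq \beta<1$, $\tau \in \mathbb{C}\setminus\{0\}$ and $m \in \mathbb{N}$. Let $f(z)=z+\sum_{k=1}^{\infty} a_{mk+1}z^{mk+1}$ belong to $\Theta_{\Sigma_m}(\tau,\lambda,0,0;\beta)$ (the case $\gamma=\delta=0$). Then $$|a_{m+1}| \leq \min\left\{\frac{2|\tau|(1-\beta)}{1+m\lambda},\ 2\sqrt{\frac{|\tau|(1-\beta)}{(m+1)(1+2m\lambda)}}\right\}\quad\text{and}\quad |a_{2m+1}| \leq \frac{2|\tau|(1-\beta)}{1+2m\lambda}.$$
   Context: Let $\mathbb{U}=\{z\in\mathbb{C}:|z|<1\}$ and $m\in\mathbb{N}$. $\mathcal{A}_m$ denotes the class of functions analytic in $\mathbb{U}$ of the form $f(z)=z+\sum_{k=1}^{\infty}a_{mk+1}z^{mk+1}$. $\Sigma_m$ denotes the class of $m$-fold symmetric bi-univalent functions: functions $f\in\mathcal{A}_m$ univalent in $\mathbb{U}$ whose inverse $f^{-1}$ extends to a univalent function $g$ on $\mathbb{U}$; this $g$ has the expansion $g(w)=w-a_{m+1}w^{m+1}+\left[(m+1)a_{m+1}^2-a_{2m+1}\right]w^{2m+1}-\cdots$. For $\delta\in\mathbb{N}_0$ and $h(z)=z+\sum_{k\ge1}c_{mk+1}z^{mk+1}$ analytic in $\mathbb{U}$, the $m$-fold Ruscheweyh derivative is $\mathcal{R}^\delta h(z)=z+\sum_{k=1}^{\infty}\frac{\Gamma(\delta+k+1)}{\Gamma(k+1)\Gamma(\delta+1)}c_{mk+1}z^{mk+1}$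 (for $\delta=0$ it is the identity). For such $h$ and parameters $\lambda,\gamma,\tau\neq0,\delta$, put $$J_h(z)=1+\frac{1}{\tau}\Big[(1-\lambda)(1-\gamma)\frac{\mathcal{R}^\delta h(z)}{z}+(\lambda(\gamma+1)+\gamma)(\mathcal{R}^\delta h)'(z)+\lambda\gamma\big(z(\mathcal{R}^\delta h)''(z)-2\big)-1\Big].$$ For $0\le\beta<1$, $\Theta_{\Sigma_m}(\tau,\lambda,\gamma,\delta;\beta)$ is the set of $f\in\Sigma_m$ such that $\operatorname{Re}J_f(z)>\beta$ for all $z\in\mathbb{U}$ and $\operatorname{Re}J_g(w)>\beta$ for all $w\in\mathbb{U}$, where $g$ is the extension of $f^{-1}$ to $\mathbb{U}$. *)

(* Defs.v *)
From Stdlib Require Import Reals.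
From Coquelicot Require Import Coquelicot.

Definition inU (z : C) : Prop := (Cmod z < 1)%R.

Definition Csum (a : nat -> C) : C :=
  @iota (CompleteNormedModule.CompleteSpace C_AbsRing C_CompleteNormedModule)
        (fun l : C => is_series a l).

(* An analytic function on U is represented by its Taylor coefficient
   sequence a (h(z) = sum_n a n z^n), the series converging on all of U. *)
Definition analytic_U (a : nat -> C) : Prop :=
  forall z : C, inU z -> ex_series (fun n => (a n * z ^ n)%C).

Definition psum (a : nat -> C) (z : C) : C := Csum (fun n => (a n * z ^ n)%C).

Definition in_Am (m : nat) (a : nat -> C) : Prop :=
  analytic_U a /\ a 0%nat = 0%C /\ a 1%nat = 1%C /\
  (forall n : nat, a n <> 0%C -> exists k : nat, n = (m * k + 1)%nat).

Definition univalent_U (a : nat -> C) : Prop :=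
  forall z w : C, inU z -> inU w -> psum a z = psum a w -> z = w.

(* f (coefficients a) is in Sigma_m with g (coefficients b) the univalent
   extension of f^{-1} to U: g = f^{-1} on f(U) /\ U. *)
Definition in_Sigma_with (m : nat) (a b : nat -> C) : Prop :=
  in_Am m a /\ univalent_U a /\ analytic_U b /\ univalent_U b /\
  (forall z : C, inU z -> inU (psum a z) -> psum b (psum a z) = z).

(* Coefficients of the m-fold Ruscheweyh derivative R^delta h:
   the coefficient of z^{mk+1} is multiplied by
   Gamma(delta+k+1)/(Gamma(k+1)Gamma(delta+1)) = binom(delta+k, k). *)
Definition Rcoef (m delta : nat) (c : nat -> C) (n : nat) : C :=
  match n with
  | O => c O
  | S n' => (RtoC (Binomial.C (delta + n' / m) (n' / m)) * c n)%C
  end.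

Definition Rh_div_z (m delta : nat) (c : nat -> C) (z : C) : C :=
  Csum (fun n => (Rcoef m delta c (S n) * z ^ n)%C).
Definition Rh_d1 (m delta : nat) (c : nat -> C) (z : C) : C :=
  Csum (fun n => (RtoC (INR (S n)) * Rcoef m delta c (S n) * z ^ n)%C).
Definition Rh_d2 (m delta : nat) (c : nat -> C) (z : C) : C :=
  Csum (fun n => (RtoC (INR (S (S n)) * INR (S n)) * Rcoef m delta c (S (S n)) * z ^ n)%C).

Definition Jfun (m : nat) (tau : C) (lam gam : R) (delta : nat)
    (c : nat -> C) (z : C) : C :=
  (1 + / tau *
     (RtoC ((1 - lam) * (1 - gam)) * Rh_div_z m delta c z
      + RtoC (lam * (gam + 1) + gam) * Rh_d1 m delta c z
      + RtoC (lam * gam) * (z * Rh_d2 m delta c z - 2)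
      - 1))%C.

Definition in_Theta (m : nat) (tau : C) (lam gam : R) (delta : nat) (beta : R)
    (a : nat -> C) : Prop :=
  exists b : nat -> C, in_Sigma_with m a b /\
    (forall z : C, inU z -> (beta < Re (Jfun m tau lam gam delta a z))%R) /\
    (forall w : C, inU w -> (beta < Re (Jfun m tau lam gam delta b w))%R).

(* Main.v *)
Require Import Defs.
From Stdlib Require Import Reals.
From Coquelicot Require Import Coquelicot.
From Stdlib Require Import Lra Lia Classical.
Open Scope R_scope.


Lemma Csum_eq (a : nat -> C) (l : C) : is_series a l -> Csum a = l.
Proof.
  intros H. unfold Csum.
  apply (@iota_unique C_AbsRing C_CompleteNormedModule (fun l0 : C => is_series a l0) l); [|exact H].
  intros y Hy.
  apply (@filterlim_locally_unique nat C_AbsRing C_NormedModule eventually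
           (Proper_StrongProper _ eventually_filter) (sum_n a) y l Hy H).
Qed.

Fixpoint psa (a : nat -> C) (L : nat) : C :=
  match L with O => 0%C | S L' => (psa a L' + a L')%C end.

Lemma is_series_shift (a : nat -> C) (l : C) (L : nat) :
  is_series a l -> is_series (fun k => a (L + k)%nat) (l - psa a L)%C.
Proof.
  intros H. induction L as [|L IH].
  - simpl. eapply is_series_ext; [|replace (l - 0)%C with l; [exact H| ring]].
    intros n; reflexivity.
  - assert (H2 : is_series (fun k => a (L + S k)%nat) (l - psa a (S L))%C).
    { apply (is_series_incr_1 (fun k => a (L + k)%nat)).
      match goal with |- is_series _ ?x => replace x with (l - psa a L)%C; [exact IH|] end.
      simpl. change plus with Cplus. rewrite Nat.add_0_r. ring. }
    eapply is_series_ext; [|exact H2]. intros n; simpl. f_equal; lia.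
Qed.

Lemma sum_n_Cmod_le (a : nat -> C) (b : nat -> R) :
  (forall n, Cmod (a n) <= b n) -> forall N, Cmod (sum_n a N) <= sum_n b N.
Proof.
  intros Hb N. induction N as [|N IH].
  - rewrite !sum_O. apply Hb.
  - rewrite !sum_Sn. change (@plus C_AbelianMonoid) with Cplus.
    change (@plus R_AbelianMonoid) with Rplus.
    eapply Rle_trans; [apply Cmod_triangle|].
    specialize (Hb (S N)). lra.
Qed.

Lemma series_norm_le (a : nat -> C) (l : C) (b : nat -> R) (lb : R) :
  is_series a l -> is_series b lb -> (forall n, Cmod (a n) <= b n) -> Cmod l <= lb.
Proof.
  intros Ha Hb Hab.
  assert (H := filterlim_le (F := eventually) (fun N => Cmod (sum_n a N)) (sum_n b) (Cmod l) lb).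
  simpl in H. apply H.
  - exists 0%nat. intros n _. apply sum_n_Cmod_le; auto.
  - apply (filterlim_comp _ _ _ (sum_n a) (@norm C_AbsRing C_NormedModule) eventually (locally l)).
    + exact Ha.
    + intros P HP. exact (@filterlim_norm C_AbsRing C_NormedModule l P HP).
  - exact Hb.
Qed.


Lemma Cmod_RtoC_pos (s : R) : 0 <= s -> Cmod (RtoC s) = s.
Proof. intros; rewrite Cmod_R; apply Rabs_pos_eq; auto. Qed.

Lemma terms_bounded (a : nat -> C) : ex_series a -> exists M, 0 <= M /\ forall n, Cmod (a n) <= M.
Proof.
  intros [l Hl].
  destruct (filterlim_bounded (sum_n a)) as [M HM]; [exists l; exact Hl|].
  assert (HM' : forall n, Cmod (sum_n a n) <= M) by exact HM.
  exists (2 * M). assert (0 <= M) by (eapply Rle_trans; [apply Cmod_ge_0| apply (HM' 0%nat)]).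
  split; [lra|]. intros n. destruct n as [|n].
  - pose proof (HM' 0%nat) as H0. rewrite sum_O in H0. lra.
  - assert (E : a (S n) = (sum_n a (S n) - sum_n a n)%C).
    { rewrite sum_Sn. change (@plus C_AbelianMonoid) with Cplus. ring. }
    rewrite E. unfold Cminus. eapply Rle_trans; [apply Cmod_triangle|].
    rewrite Cmod_opp. pose proof (HM' (S n)). pose proof (HM' n). lra.
Qed.

Lemma coef_bound (c : nat -> C) : analytic_U c ->
  forall s, 0 <= s < 1 -> exists M, 0 <= M /\ forall n, Cmod (c n) * s ^ n <= M.
Proof.
  intros Ha s Hs.
  assert (Hin : inU (RtoC s)) by (unfold inU; rewrite Cmod_RtoC_pos; lra).
  destruct (terms_bounded _ (Ha _ Hin)) as [M [HM0 HM]].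
  exists M; split; auto. intros n. specialize (HM n).
  rewrite Cmod_mult, Cmod_pow, Cmod_RtoC_pos in HM; lra.
Qed.

Lemma tail_bound (a : nat -> C) (l : C) (B q : R) (L : nat) :
  is_series a l -> 0 <= q < 1 -> (forall n, Cmod (a n) <= B * q ^ n) ->
  Cmod (l - psa a L)%C <= B * q ^ L / (1 - q).
Proof.
  intros Ha Hq Hb.
  apply (series_norm_le (fun k => a (L + k)%nat) _ (fun k => B * q ^ L * q ^ k)).
  - apply is_series_shift; auto.
  - unfold Rdiv. apply (is_series_scal (V := R_NormedModule) (B * q ^ L)).
    apply is_series_geom. rewrite Rabs_pos_eq; lra.
  - intros k. rewrite Rmult_assoc, <- pow_add. apply Hb.
Qed.


Definition om (N : nat) : C := (cos (2 * PI / INR N), sin (2 * PI / INR N)).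

Lemma om_pow N n : Cpow (om N) n = (cos (INR n * (2 * PI / INR N)), sin (INR n * (2 * PI / INR N))).
Proof.
  induction n as [|n IH].
  - simpl. rewrite Rmult_0_l, cos_0, sin_0. reflexivity.
  - rewrite Cpow_S, IH. unfold om, Cmult. simpl fst; simpl snd.
    rewrite S_INR, Rmult_plus_distr_r, Rmult_1_l.
    rewrite cos_plus, sin_plus. f_equal; ring.
Qed.

Lemma om_mod N n : Cmod (Cpow (om N) n) = 1.
Proof.
  rewrite om_pow. unfold Cmod. simpl fst; simpl snd.
  rewrite <- sqrt_1. f_equal. pose proof (sin2_cos2 (INR n * (2 * PI / INR N))).
  unfold Rsqr in H. lra.
Qed.

Lemma om_N N : (0 < N)%nat -> Cpow (om N) N = 1%C.
Proof.
  intros HN. rewrite om_pow.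
  replace (INR N * (2 * PI / INR N)) with (2 * PI).
  - rewrite cos_2PI, sin_2PI. reflexivity.
  - field. apply not_0_INR. lia.
Qed.

Lemma om_ne1 N s : (0 < s < N)%nat -> Cpow (om N) s <> 1%C.
Proof.
  intros Hs E. rewrite om_pow in E. injection E as E1 E2.
  set (x := INR s * (2 * PI / INR N)) in *.
  assert (Hx : 0 < x / 2 < PI).
  { unfold x. assert (0 < INR s) by (apply lt_0_INR; lia).
    assert (INR s < INR N) by (apply lt_INR; lia).
    assert (0 < INR N) by lra. pose proof PI_RGT_0.
    split.
    - apply Rmult_lt_0_compat; [|lra]. apply Rmult_lt_0_compat; [lra|].
      apply Rmult_lt_0_compat; [lra| apply Rinv_0_lt_compat; lra].
    - replace (INR s * (2 * PI / INR N) / 2) with (PI * (INR s / INR N)) by (field; lra).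
      rewrite <- (Rmult_1_r PI) at 2. apply Rmult_lt_compat_l; [lra|].
      apply (Rmult_lt_reg_r (INR N)); [lra|]. unfold Rdiv. rewrite Rmult_assoc, Rinv_l; lra. }
  pose proof (sin_gt_0 _ (proj1 Hx) (proj2 Hx)).
  replace x with (2 * (x / 2)) in E1 by field.
  rewrite cos_2a_sin in E1. nra.
Qed.

Lemma om_pow_mod N s : (0 < N)%nat -> Cpow (om N) s = Cpow (om N) (s mod N).
Proof.
  intros HN. rewrite (Nat.div_mod s N) at 1 by lia.
  rewrite Cpow_add_r, Cpow_mult_r, om_N, Cpow_1_l by auto. ring.
Qed.

Lemma geom_psa (u : C) N : ((u - 1) * psa (fun j => Cpow u j) N = Cpow u N - 1)%C.
Proof.
  induction N as [|N IH]; simpl psa.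
  - simpl. ring.
  - rewrite Cpow_S. rewrite Cmult_plus_distr_l, IH. ring.
Qed.

Lemma psa_const1 N : psa (fun j => Cpow 1%C j) N = RtoC (INR N).
Proof.
  induction N as [|N IH]; simpl psa.
  - reflexivity.
  - rewrite IH, Cpow_1_l, S_INR. rewrite RtoC_plus. reflexivity.
Qed.

Lemma G_val N s : (0 < N)%nat ->
  psa (fun j => Cpow (Cpow (om N) s) j) N = if Nat.eqb (s mod N) 0 then RtoC (INR N) else 0%C.
Proof.
  intros HN. destruct (Nat.eqb_spec (s mod N) 0) as [E|E].
  - rewrite om_pow_mod, E by auto. simpl Cpow at 2. apply psa_const1.
  - assert (Hu : (Cpow (om N) s - 1 <> 0)%C).
    { rewrite om_pow_mod by auto. intros H. apply (om_ne1 N (s mod N)).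
      + split; [lia|]. apply Nat.mod_upper_bound; lia.
      + assert (E2 : Cpow (om N) (s mod N) = ((Cpow (om N) (s mod N) - 1) + 1)%C) by ring.
        rewrite E2, H. ring. }
    pose proof (geom_psa (Cpow (om N) s) N) as G.
    assert (E3 : Cpow (Cpow (om N) s) N = 1%C).
    { rewrite <- Cpow_mult_r. rewrite (Nat.mul_comm s N). rewrite Cpow_mult_r, om_N by auto.
      apply Cpow_1_l. }
    rewrite E3 in G.
    assert (G' : ((Cpow (om N) s - 1) * psa (fun j => Cpow (Cpow (om N) s) j) N = 0)%C)
      by (rewrite G; ring).
    replace (psa (fun j => Cpow (Cpow (om N) s) j) N) with
      (/ (Cpow (om N) s - 1) * ((Cpow (om N) s - 1) * psa (fun j => Cpow (Cpow (om N) s) j) N))%C.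
    + rewrite G'. ring.
    + rewrite Cmult_assoc, Cinv_l by exact Hu. ring.
Qed.


Lemma psum_series (c : nat -> C) (z : C) : analytic_U c -> inU z -> is_series (fun n => (c n * Cpow z n)%C) (psum c z).
Proof.
  intros Ha Hz. destruct (Ha z Hz) as [l Hl]. unfold psum. rewrite (Csum_eq _ l Hl). exact Hl.
Qed.

Lemma is_series_C0 : @is_series C_AbsRing C_NormedModule (fun _ : nat => RtoC 0) (RtoC 0).
Proof.
  unfold is_series. eapply filterlim_ext; [|apply filterlim_const].
  intros n. simpl. induction n as [|n IH].
  - rewrite sum_O. reflexivity.
  - rewrite sum_Sn, <- IH. symmetry. apply (@plus_zero_r (NormedModule.AbelianMonoid C_AbsRing C_NormedModule)).
Qed.

Lemma fin_interchange (y : nat -> nat -> C) (Y : nat -> C) N :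
  (forall j, is_series (y j) (Y j)) ->
  is_series (fun l => psa (fun j => y j l) N) (psa Y N).
Proof.
  intros H. induction N as [|N IH]; simpl psa.
  - apply is_series_C0.
  - apply (is_series_plus _ _ _ _ IH (H N)).
Qed.

Lemma psa_ext (f g : nat -> C) N : (forall j, (j < N)%nat -> f j = g j) -> psa f N = psa g N.
Proof.
  induction N as [|N IH]; intros H; simpl; [reflexivity|].
  rewrite IH; [rewrite H; [reflexivity|lia]|intros; apply H; lia].
Qed.

Lemma psa_scal (k : C) (f : nat -> C) N : psa (fun j => (k * f j)%C) N = (k * psa f N)%C.
Proof. induction N as [|N IH]; simpl; [ring|]. rewrite IH; ring. Qed.

Lemma psa_single (f : nat -> C) L i : (i < L)%nat -> (forall l, (l < L)%nat -> l <> i -> f l = 0%C) -> psa f L = f i.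
Proof.
  induction L as [|L IH]; intros Hi H; [lia|]. simpl.
  destruct (Nat.eq_dec i L) as [->|Hne].
  - assert (psa f L = 0%C).
    { clear IH Hi. assert (forall L', (L' <= L)%nat -> psa f L' = 0%C); [|auto].
      induction L' as [|L' IH']; intros HL; simpl; [reflexivity|].
      rewrite IH' by lia. rewrite H by lia. ring. }
    rewrite H0. ring.
  - rewrite IH by (lia || (intros; apply H; lia)). rewrite (H L) by lia. ring.
Qed.

Lemma psa_zero (f : nat -> C) L : (forall l, (l < L)%nat -> f l = 0%C) -> psa f L = 0%C.
Proof.
  induction L as [|L IH]; intros H; simpl; [reflexivity|].
  rewrite IH, H by (lia || (intros; apply H; lia)). ring.
Qed.

Lemma psa_conj (f : nat -> C) N : Cconj (psa f N) = psa (fun j => Cconj (f j)) N.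
Proof.
  induction N as [|N IH]; simpl.
  - apply injective_projections; simpl; ring.
  - rewrite Cplus_conj, IH. reflexivity.
Qed.

Lemma psa_Cmod_Re (f g : nat -> C) N : (forall j, Cmod (f j) <= Re (g j)) -> Cmod (psa f N) <= Re (psa g N).
Proof.
  intros H. induction N as [|N IH].
  - simpl. rewrite Cmod_0. simpl. lra.
  - change (Cmod (psa f N + f N) <= Re (psa g N + g N)).
    eapply Rle_trans; [apply Cmod_triangle|]. rewrite re_plus. specialize (H N). lra.
Qed.

Lemma Re_psa f N : Re (psa f N) = 0 -> True.
Proof. auto. Qed.

Lemma conj_unit u v : Cmod u = 1 -> (u * v = 1)%C -> Cconj u = v.
Proof.
  intros Hu Huv. pose proof (Cmod2_conj u) as E. rewrite Hu in E.
  assert (E2 : Cconj u = (Cconj u * (u * v))%C) by (rewrite Huv; ring).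
  rewrite E2. replace (Cconj u * (u * v))%C with ((u * Cconj u) * v)%C by ring.
  rewrite <- E, pow1. ring.
Qed.

Lemma plus_conj (p : C) : (p + Cconj p)%C = RtoC (2 * Re p).
Proof. destruct p as [a b]. apply injective_projections; simpl; ring. Qed.

Lemma Cmod_RtoC_mult_pos (w : C) (x : R) : Cmod w = 1 -> 0 <= x -> Cmod (w * RtoC x) = x.
Proof. intros Hw Hx. rewrite Cmod_mult, Hw, Cmod_RtoC_pos; lra. Qed.


Lemma pow_swap (w : C) j m : Cpow (Cpow w j) m = Cpow (Cpow w m) j.
Proof. rewrite <- !Cpow_mult_r, Nat.mul_comm. reflexivity. Qed.

Lemma om_mod2 N j m : Cmod (Cpow (Cpow (om N) j) m) = 1.
Proof. rewrite <- Cpow_mult_r. apply om_mod. Qed.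

Lemma psa_plus (f g : nat -> C) N : (psa f N + psa g N)%C = psa (fun j => (f j + g j)%C) N.
Proof. induction N as [|N IH]; simpl; [ring|]. rewrite <- IH. ring. Qed.

Lemma Re_scal (a : R) (X : C) : Re (RtoC a * X)%C = a * Re X.
Proof. destruct X as [x y]. unfold Re, RtoC, Cmult; simpl. ring. Qed.

Lemma Re_le_Cmod (X : C) : Re X <= Cmod X.
Proof. pose proof (re_le_Cmod X). pose proof (Rle_abs (Re X)). lra. Qed.

Lemma Re_plus' (X Y : C) : Re (X + Y)%C = Re X + Re Y.
Proof. apply re_plus. Qed.

Lemma cara_N (c : nat -> C) (Ha : analytic_U c) (Hpos : forall z, inU z -> 0 < Re (psum c z))
  (k : nat) (r M q : R) (N : nat) :
  (1 <= k)%nat -> 0 < r < 1 -> 0 <= q < 1 -> 0 <= M ->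
  (forall n, Cmod (c n) * r ^ n <= M * q ^ n) -> (2 * k + 1 <= N)%nat ->
  Cmod (c k) * r ^ k <= 2 * Re (c 0%nat) + 4 * (M * q ^ (N - k) / (1 - q)).
Proof.
  intros Hk Hr Hq HM Hx HN.
  set (p := fun j => psum c (RtoC r * Cpow (om N) j)%C).
  set (A := fun t => psa (fun j => (Cpow (Cpow (om N) j) t * p j)%C) N).
  set (x := fun t l => (c l * RtoC (r ^ l) * psa (fun j => Cpow (Cpow (om N) (t + l)) j) N)%C).
  assert (HN0 : (0 < N)%nat) by lia.
  assert (HINR : 0 < INR N) by (apply lt_0_INR; lia).
  assert (Hin : forall j, inU (RtoC r * Cpow (om N) j)%C).
  { intros j. unfold inU. rewrite Cmod_mult, Cmod_RtoC_pos by lra.  rewrite om_mod. lra. }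
  assert (HA : forall t, is_series (x t) (A t)).
  { intros t. unfold A.
    eapply is_series_ext; [|apply (fin_interchange (fun j l => (Cpow (Cpow (om N) j) t * (c l * Cpow (RtoC r * Cpow (om N) j) l))%C))].
    - intros l. simpl. unfold x. rewrite <- psa_scal. apply psa_ext. intros j _.
      rewrite Cpow_mult_l, <- RtoC_pow.
      rewrite (pow_swap (om N) (t + l) j), Cpow_add_r. ring.
    - intros j. apply (@is_series_scal C_AbsRing C_NormedModule (Cpow (Cpow (om N) j) t)).
      apply psum_series; auto. }
  assert (Hxb : forall t l, Cmod (x t l) <= (INR N * M) * q ^ l).
  { intros t l. unfold x. rewrite G_val by auto.
    rewrite !Cmod_mult, Cmod_RtoC_pos by (apply pow_le; lra).
    specialize (Hx l).
    destruct (Nat.eqb ((t + l) mod N) 0).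
    - rewrite Cmod_RtoC_pos by lra.
      replace (Cmod (c l) * r ^ l * INR N) with (INR N * (Cmod (c l) * r ^ l)) by ring.
      rewrite Rmult_assoc. apply Rmult_le_compat_l; lra.
    - rewrite Cmod_0, Rmult_0_r. apply Rmult_le_pos; [apply Rmult_le_pos; lra| apply pow_le; lra]. }
  set (L := (N - k)%nat).
  set (B := INR N * M * q ^ L / (1 - q)).
  assert (HT : forall t, Cmod (A t - psa (x t) L)%C <= B).
  { intros t. apply (tail_bound (x t)); auto. }
  assert (P1 : psa (x (N - k)%nat) L = (c k * RtoC (r ^ k) * RtoC (INR N))%C).
  { rewrite (psa_single (x (N - k)%nat) L k); [ | unfold L; lia | ].
    - unfold x. rewrite G_val by auto.
      replace ((N - k + k) mod N)%nat with 0%nat.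
      + reflexivity.
      + replace (N - k + k)%nat with (0 + 1 * N)%nat by lia. rewrite Nat.Div0.mod_add. symmetry. apply Nat.Div0.mod_0_l.
    - intros l Hl Hlk. unfold x. rewrite G_val by auto.
      destruct (Nat.eqb_spec ((N - k + l) mod N) 0) as [E|E]; [|ring].
      exfalso. unfold L in Hl.
      destruct (Nat.lt_ge_cases l k).
      + rewrite Nat.mod_small in E by lia. lia.
      + replace (N - k + l)%nat with ((l - k) + 1 * N)%nat in E by lia.
        rewrite Nat.Div0.mod_add, Nat.mod_small in E by lia. lia. }
  assert (P2 : psa (x k) L = 0%C).
  { apply psa_zero. intros l Hl. unfold x. rewrite G_val by auto.
    unfold L in Hl. rewrite Nat.mod_small by lia.
    destruct (Nat.eqb_spec (k + l) 0); [lia|ring]. }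
  assert (P3 : psa (x 0%nat) L = (c 0%nat * RtoC (INR N))%C).
  { rewrite (psa_single (x 0%nat) L 0); [ | unfold L; lia | ].
    - unfold x. rewrite G_val by auto. simpl. rewrite Nat.Div0.mod_0_l. simpl. ring.
    - intros l Hl Hl0. unfold x. rewrite G_val by auto. unfold L in Hl.
      simpl. rewrite Nat.mod_small by lia.
      destruct (Nat.eqb_spec l 0); [lia|ring]. }
  assert (Key : Cmod (A (N - k)%nat + Cconj (A k))%C <= 2 * Re (A 0%nat)).
  { assert (E : (A (N - k)%nat + Cconj (A k))%C =
                psa (fun j => (Cpow (Cpow (om N) j) (N - k) * RtoC (2 * Re (p j))))%C N).
    { unfold A. rewrite psa_conj, psa_plus. apply psa_ext. intros j _.
      rewrite Cmult_conj.
      rewrite (conj_unit (Cpow (Cpow (om N) j) k) (Cpow (Cpow (om N) j) (N - k))).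
      - rewrite <- plus_conj. ring.
      - apply om_mod2.
      - rewrite <- Cpow_add_r. replace (k + (N - k))%nat with N by lia.
        rewrite pow_swap.  rewrite om_N by auto. apply Cpow_1_l. }
    rewrite E.
    assert (E0 : (2 * Re (A 0%nat)) = Re (psa (fun j => RtoC 2 * p j)%C N)).
    { rewrite psa_scal, Re_scal. f_equal. unfold A. f_equal. apply psa_ext. intros j _. simpl. ring. }
    rewrite E0. apply psa_Cmod_Re. intros j.
    rewrite Cmod_RtoC_mult_pos.
    - rewrite Re_scal. lra.
    - apply om_mod2.
    - pose proof (Hpos _ (Hin j)). unfold p. lra. }
  pose proof (HT (N - k)%nat) as T1. rewrite P1 in T1.
  pose proof (HT k) as T2. rewrite P2 in T2.
  pose proof (HT 0%nat) as T3. rewrite P3 in T3.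
  assert (Ek : (c k * RtoC (r ^ k) * RtoC (INR N))%C =
     ((A (N - k)%nat + Cconj (A k)) - (A (N - k)%nat - c k * RtoC (r ^ k) * RtoC (INR N)) - Cconj (A k - 0))%C).
  { replace (A k - 0)%C with (A k) by ring. ring. }
  assert (Hck : Cmod (c k * RtoC (r ^ k) * RtoC (INR N))%C <= 2 * Re (A 0%nat) + 2 * B).
  { rewrite Ek. unfold Cminus.
    eapply Rle_trans; [apply Cmod_triangle|]. rewrite Cmod_opp, Cmod_conj.
    eapply Rle_trans; [apply Rplus_le_compat_r, Cmod_triangle|]. rewrite Cmod_opp.
    unfold Cminus in T1, T2. lra. }
  assert (H0 : Re (A 0%nat) <= INR N * Re (c 0%nat) + B).
  { replace (A 0%nat) with ((c 0%nat * RtoC (INR N)) + (A 0%nat - c 0%nat * RtoC (INR N)))%C by ring.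
    rewrite Re_plus'. pose proof (Re_le_Cmod (A 0%nat - c 0%nat * RtoC (INR N))%C).
    assert (Er : Re (c 0%nat * RtoC (INR N))%C = INR N * Re (c 0%nat)).
    { rewrite Cmult_comm. apply Re_scal. }
    rewrite Er. lra. }
  rewrite !Cmod_mult, !Cmod_RtoC_pos in Hck by (lra || (apply pow_le; lra)).
  unfold B in *.
  assert (Hfin : INR N * (Cmod (c k) * r ^ k) <= INR N * (2 * Re (c 0%nat) + 4 * (M * q ^ L / (1 - q)))).
  { unfold Rdiv in *. nra. }
  apply Rmult_le_reg_l in Hfin; auto.
Qed.



Lemma bernoulli_low (x : R) (n : nat) : 0 <= x <= 1 -> 1 - INR n * (1 - x) <= x ^ n.
Proof.
  intros Hx. induction n as [|n IH].
  - simpl. lra.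
  - rewrite S_INR. simpl. assert (0 <= INR n) by apply pos_INR.
    assert (x * (1 - INR n * (1 - x)) <= x * x ^ n) by (apply Rmult_le_compat_l; lra).
    assert (0 <= INR n * ((1 - x) * (1 - x))) by (apply Rmult_le_pos; nra). nra.
Qed.

Lemma cara (c : nat -> C) : analytic_U c -> (forall z, inU z -> 0 < Re (psum c z)) ->
  forall k, (1 <= k)%nat -> Cmod (c k) <= 2 * Re (c 0%nat).
Proof.
  intros Ha Hpos k Hk.
  assert (Step1 : forall r, 0 < r < 1 -> Cmod (c k) * r ^ k <= 2 * Re (c 0%nat)).
  { intros r Hr.
    set (s := (1 + r) / 2).
    destruct (coef_bound c Ha s) as [M [HM0 HM]]; [unfold s; lra|].
    set (q := r / s).
    assert (Hq : 0 <= q < 1).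
    { unfold q, s. split; [apply Rmult_le_pos; [lra| left; apply Rinv_0_lt_compat; lra]|].
      apply (Rmult_lt_reg_r ((1 + r) / 2)); [lra|]. unfold Rdiv. field_simplify; lra. }
    assert (Hx : forall n, Cmod (c n) * r ^ n <= M * q ^ n).
    { intros n. replace r with (s * q) at 1 by (unfold q, s; field; lra).
      rewrite Rpow_mult_distr, <- Rmult_assoc. apply Rmult_le_compat_r; [apply pow_le; lra| apply HM]. }
    apply Rnot_lt_le. intros Hlt.
    set (eps := Cmod (c k) * r ^ k - 2 * Re (c 0%nat)).
    assert (Heps : 0 < eps) by (unfold eps; lra).
    destruct (pow_lt_1_zero q) with (y := eps * (1 - q) / (4 * M + 1)) as [N0 HN0].
    { rewrite Rabs_pos_eq; lra. }
    { apply Rmult_lt_0_compat; [nra| apply Rinv_0_lt_compat; lra]. }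
    pose proof (cara_N c Ha Hpos k r M q (2 * k + 1 + N0 + k) Hk Hr Hq HM0 Hx ltac:(lia)) as H.
    specialize (HN0 (2 * k + 1 + N0 + k - k)%nat ltac:(lia)).
    rewrite Rabs_pos_eq in HN0 by (apply pow_le; lra).
    set (Q := q ^ (2 * k + 1 + N0 + k - k)) in *.
    assert (HQ : 4 * (M * Q / (1 - q)) < eps).
    { apply (Rmult_lt_compat_l (4 * M)) in HN0; [| lra] || idtac.
      assert (4 * M * Q <= eps * (1 - q) * (4 * M / (4 * M + 1))).
      { unfold Rdiv in *. assert (0 <= Q) by (unfold Q; apply pow_le; lra).
        assert (Q <= eps * (1 - q) * / (4 * M + 1)) by lra.
        replace (eps * (1 - q) * (4 * M * / (4 * M + 1))) with (4 * M * (eps * (1 - q) * / (4 * M + 1))) by ring.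
        apply Rmult_le_compat_l; lra. }
      assert (4 * M / (4 * M + 1) < 1).
      { apply (Rmult_lt_reg_r (4 * M + 1)); [lra|]. unfold Rdiv. rewrite Rmult_assoc, Rinv_l; lra. }
      replace (4 * (M * Q / (1 - q))) with ((4 * M * Q) / (1 - q)) by (field; lra).
      apply (Rmult_lt_reg_r (1 - q)); [lra|]. unfold Rdiv. rewrite Rmult_assoc, Rinv_l by lra.
      assert (0 < eps * (1 - q)) by nra. nra. }
    unfold eps in HQ. lra. }
  apply Rnot_lt_le. intros Hlt.
  set (C0 := Cmod (c k)). set (d := C0 - 2 * Re (c 0%nat)).
  assert (Hd : 0 < d) by (unfold d, C0; lra).
  assert (HC0 : 0 < C0).
  { pose proof (Step1 (1/2) ltac:(lra)). assert (0 <= (1/2) ^ k) by (apply pow_le; lra).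
    assert (0 <= C0 * (1/2) ^ k) by (apply Rmult_le_pos; [apply Cmod_ge_0| auto]).
    assert (0 <= 2 * Re (c 0%nat)) by (fold C0 in H; lra).
    unfold d in Hd. lra. }
  assert (Hkp : 0 < INR k) by (apply lt_0_INR; lia).
  set (e := Rmin (1/2) (d / (2 * INR k * C0))).
  assert (He : 0 < e <= 1/2).
  { unfold e. split; [apply Rmin_pos; [lra| apply Rmult_lt_0_compat; [lra| apply Rinv_0_lt_compat; nra]]| apply Rmin_l]. }
  assert (He2 : e <= d / (2 * INR k * C0)) by apply Rmin_r.
  specialize (Step1 (1 - e) ltac:(lra)).
  pose proof (bernoulli_low (1 - e) k ltac:(lra)) as Hb.
  assert (INR k * e * C0 <= d / 2).
  { apply (Rmult_le_compat_r (2 * INR k * C0)) in He2; [| nra].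
    assert (d / (2 * INR k * C0) * (2 * INR k * C0) = d) by (field; nra). nra. }
  fold C0 in Step1.
  assert (C0 * (1 - INR k * (1 - (1 - e))) <= C0 * (1 - e) ^ k) by (apply Rmult_le_compat_l; lra).
  assert (C0 * (1 - INR k * (1 - (1 - e))) = C0 - INR k * e * C0) by ring.
  unfold d in *. lra.
Qed.


Lemma lin_geom_bound (y : R) : 0 < y < 1 -> forall n, INR (S n) * y ^ n <= 1 + y / (1 - y).
Proof.
  intros Hy n. set (h := / y - 1).
  assert (Hh : 0 < h) by (unfold h; assert (1 < / y) by (rewrite <- Rinv_1; apply Rinv_lt_contravar; lra); lra).
  assert (Bn : forall n, 1 + INR n * h <= (1 + h) ^ n).
  { induction n0 as [|n0 IH]; [simpl; lra|]. rewrite S_INR. simpl.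
    assert (0 <= INR n0) by apply pos_INR. nra. }
  assert (E : (1 + h) ^ n * y ^ n = 1).
  { rewrite <- Rpow_mult_distr. replace ((1 + h) * y) with 1 by (unfold h; field; lra). apply pow1. }
  specialize (Bn n). assert (0 <= INR n) by apply pos_INR.
  assert (Hyn : 0 < y ^ n) by (apply pow_lt; lra).
  assert (y ^ n * (1 + INR n * h) <= 1) by nra.
  replace (y / (1 - y)) with (/ h) by (unfold h; field; lra).
  rewrite S_INR.
  assert (0 <= y ^ n * (INR n * h)) by (apply Rmult_le_pos; [lra| apply Rmult_le_pos; lra]).
  assert (Ey : y ^ n * (1 + INR n * h) = y ^ n + y ^ n * (INR n * h)) by ring.
  assert (y ^ n <= 1) by lra.
  assert (INR n * h * y ^ n <= 1 - y ^ n) by lra.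
  apply (Rmult_le_reg_r h); [lra|].
  replace ((1 + / h) * h) with (h + 1) by (field; lra). nra.
Qed.

Lemma weighted_ex (c : nat -> C) (w : nat -> R) : analytic_U c ->
  (forall n, Rabs (w n) <= INR (S n)) ->
  forall z, inU z -> ex_series (fun n => (RtoC (w n) * c (S n) * Cpow z n)%C).
Proof.
  intros Ha Hw z Hz. unfold inU in Hz.
  set (s := (1 + Cmod z) / 2).
  pose proof (Cmod_ge_0 z).
  destruct (coef_bound c Ha s) as [M [HM0 HM]]; [unfold s; lra|].
  set (x := Cmod z / s).
  assert (Hs : 0 < s) by (unfold s; lra).
  assert (Hx : 0 <= x < 1).
  { unfold x. split; [apply Rmult_le_pos; [lra| left; apply Rinv_0_lt_compat; lra]|].
    apply (Rmult_lt_reg_r s); [lra|]. unfold Rdiv. rewrite Rmult_assoc, Rinv_l; unfold s in *; lra. }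
  set (y := (1 + x) / 2).
  assert (Hy : 0 < y < 1) by (unfold y; lra).
  set (g := x / y).
  assert (Hg : 0 <= g < 1).
  { unfold g. split; [apply Rmult_le_pos; [lra| left; apply Rinv_0_lt_compat; lra]|].
    apply (Rmult_lt_reg_r y); [lra|]. unfold Rdiv. rewrite Rmult_assoc, Rinv_l; unfold y in *; lra. }
  set (K := 1 + y / (1 - y)).
  apply (@ex_series_le C_AbsRing C_CompleteNormedModule (fun n => (RtoC (w n) * c (S n) * Cpow z n)%C) (fun n => (M / s * K) * g ^ n)).
  - intros n. change (Cmod (RtoC (w n) * c (S n) * Cpow z n)%C <= M / s * K * g ^ n).
    rewrite !Cmod_mult, Cmod_pow, Cmod_R.
    specialize (HM (S n)). specialize (Hw n).
    pose proof (lin_geom_bound y Hy n) as Hl. fold K in Hl.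
    assert (Ez : Cmod z = s * x) by (unfold x; field; lra).
    assert (Ex : x = y * g) by (unfold g; field; lra).
    rewrite Ez, Ex, !Rpow_mult_distr.
    simpl pow in HM.
    assert (Hc : Cmod (c (S n)) * s ^ n <= M / s).
    { apply (Rmult_le_reg_l s); [lra|]. replace (s * (M / s)) with M by (field; lra). lra. }
    assert (0 <= Cmod (c (S n)) * s ^ n) by (apply Rmult_le_pos; [apply Cmod_ge_0| apply pow_le; lra]).
    assert (0 <= g ^ n) by (apply pow_le; lra).
    assert (0 <= y ^ n) by (apply pow_le; lra).
    assert (0 <= Rabs (w n)) by apply Rabs_pos.
    assert (Rabs (w n) * y ^ n <= K) by (eapply Rle_trans; [|exact Hl]; apply Rmult_le_compat_r; lra).
    assert (0 <= Rabs (w n) * y ^ n) by (apply Rmult_le_pos; lra).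
    replace (Rabs (w n) * Cmod (c (S n)) * (s ^ n * (y ^ n * g ^ n)))
      with ((Cmod (c (S n)) * s ^ n) * (Rabs (w n) * y ^ n) * g ^ n) by ring.
    apply Rmult_le_compat_r; [lra|]. apply Rmult_le_compat; lra.
  - exists (M / s * K * / (1 - g)).
    apply (is_series_scal (V := R_NormedModule) (M / s * K)). apply is_series_geom.
    rewrite Rabs_pos_eq; lra.
Qed.

Lemma ex_series_Csum (a : nat -> C) : ex_series a -> is_series a (Csum a).
Proof. intros [l Hl]. rewrite (Csum_eq _ l Hl). exact Hl. Qed.

Lemma is_series_delta (K : C) : @is_series C_AbsRing C_NormedModule (fun n : nat => if Nat.eqb n 0 then K else RtoC 0) K.
Proof.
  apply is_series_decr_1. simpl.
  match goal with |- is_series _ ?x => replace x with (RtoC 0) end.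
  - apply is_series_C0.
  - change (RtoC 0 = Cplus K (Copp K)). ring.
Qed.

Definition eJ (tau : C) (lam beta : R) (c : nat -> C) (n : nat) : C :=
  match n with
  | O => (1 + / tau * (c 1%nat - 1) - RtoC beta)%C
  | S n' => (/ tau * RtoC (1 + INR n * lam) * c (S n))%C
  end.

Lemma J_series (m : nat) (tau : C) (lam beta : R) (c : nat -> C) : analytic_U c -> forall z, inU z ->
  is_series (fun n => eJ tau lam beta c n * Cpow z n)%C (Jfun m tau lam 0 0 c z - RtoC beta)%C.
Proof.
  intros Ha z Hz.
  assert (ER : forall n, Rcoef m 0 c (S n) = c (S n)).
  { intros n. unfold Rcoef. simpl Nat.add. rewrite C_n_n. ring. }
  assert (W1 : forall n, Rabs ((fun _ : nat => 1) n) <= INR (S n)).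
  { intros n. cbv beta. rewrite Rabs_R1. rewrite S_INR. pose proof (pos_INR n). lra. }
  assert (W2 : forall n, Rabs ((fun n => INR (S n)) n) <= INR (S n)).
  { intros n. cbv beta. rewrite Rabs_pos_eq; [lra| apply pos_INR]. }
  assert (S1 : is_series (fun n => Rcoef m 0 c (S n) * Cpow z n)%C (Rh_div_z m 0 c z)).
  { unfold Rh_div_z. apply ex_series_Csum.
    eapply ex_series_ext; [|exact (weighted_ex c (fun _ => 1) Ha W1 z Hz)].
    intros n. rewrite ER. match goal with |- ?a = ?b => change (@eq C a b) end. ring. }
  assert (S2 : is_series (fun n => RtoC (INR (S n)) * Rcoef m 0 c (S n) * Cpow z n)%C (Rh_d1 m 0 c z)).
  { unfold Rh_d1. apply ex_series_Csum.
    eapply ex_series_ext; [|exact (weighted_ex c (fun n => INR (S n)) Ha W2 z Hz)].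
    intros n. rewrite ER. reflexivity. }
  set (K := (1 - / tau - RtoC beta)%C).
  assert (HT : is_series (fun n => (Cinv tau * (RtoC (Rminus 1 lam) * (Rcoef m 0 c (S n) * Cpow z n)
                        + RtoC lam * (RtoC (INR (S n)) * Rcoef m 0 c (S n) * Cpow z n))
                        + (if Nat.eqb n 0 then K else RtoC 0))%C)
             (Cinv tau * (RtoC (Rminus 1 lam) * Rh_div_z m 0 c z + RtoC lam * Rh_d1 m 0 c z) + K)%C).
  { exact (@is_series_plus C_AbsRing C_NormedModule _ _ _ _
            (@is_series_scal C_AbsRing C_NormedModule (Cinv tau) _ _
              (@is_series_plus C_AbsRing C_NormedModule _ _ _ _
                (@is_series_scal C_AbsRing C_NormedModule (RtoC (Rminus 1 lam)) _ _ S1)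
                (@is_series_scal C_AbsRing C_NormedModule (RtoC lam) _ _ S2)))
            (is_series_delta K)). }
  match goal with |- is_series _ ?x => replace x with
      (Cinv tau * (RtoC (Rminus 1 lam) * Rh_div_z m 0 c z + RtoC lam * Rh_d1 m 0 c z) + K)%C end.
  2:{
    unfold Jfun, K.
    replace ((1 - lam) * (1 - 0)) with (1 - lam) by ring.
    replace (lam * (0 + 1) + 0) with lam by ring.
    replace (lam * 0) with 0 by ring.
    ring. }
  revert HT. apply is_series_ext.
  - intros n. rewrite ER. destruct n as [|n].
    + simpl. unfold K. rewrite RtoC_minus. replace (INR 1) with 1 by reflexivity.
      match goal with |- ?a = ?b => change (@eq C a b) end. ring.
    + simpl Nat.eqb. cbv iota. unfold eJ.
      rewrite !S_INR.
      repeat first [rewrite RtoC_plus | rewrite RtoC_minus | rewrite RtoC_mult].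
      match goal with |- ?a = ?b => change (@eq C a b) end. ring.
Qed.


Definition bigO (F : R -> C) (K : nat) : Prop :=
  exists C d, 0 < d /\ forall t, 0 < t < d -> Cmod (F t) <= C * t ^ K.

Lemma BO_bound (F G : R -> C) K d0 : 0 < d0 -> (forall t, 0 < t < d0 -> Cmod (F t) <= Cmod (G t)) ->
  bigO G K -> bigO F K.
Proof.
  intros Hd0 HFG [C [d [Hd HG]]]. exists C, (Rmin d0 d). split; [apply Rmin_pos; auto|].
  intros t Ht. assert (t < d0) by (eapply Rlt_le_trans; [apply Ht| apply Rmin_l]).
  assert (t < d) by (eapply Rlt_le_trans; [apply Ht| apply Rmin_r]).
  eapply Rle_trans; [apply HFG; lra| apply HG; lra].
Qed.

Lemma BO_ext (F G : R -> C) K d0 : 0 < d0 -> (forall t, 0 < t < d0 -> F t = G t) ->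
  bigO G K -> bigO F K.
Proof.
  intros Hd0 HFG. apply (BO_bound F G K d0 Hd0). intros t Ht. rewrite HFG; auto. lra.
Qed.

Lemma BO_ext_all (F G : R -> C) K : (forall t, F t = G t) -> bigO G K -> bigO F K.
Proof. intros H. apply (BO_ext F G K 1); [lra| intros; auto]. Qed.

Lemma BO_plus (F G : R -> C) K : bigO F K -> bigO G K -> bigO (fun t => F t + G t)%C K.
Proof.
  intros [C1 [d1 [Hd1 H1]]] [C2 [d2 [Hd2 H2]]]. exists (C1 + C2), (Rmin d1 d2).
  split; [apply Rmin_pos; auto|]. intros t Ht.
  assert (t < d1) by (eapply Rlt_le_trans; [apply Ht| apply Rmin_l]).
  assert (t < d2) by (eapply Rlt_le_trans; [apply Ht| apply Rmin_r]).
  eapply Rle_trans; [apply Cmod_triangle|].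
  specialize (H1 t ltac:(lra)). specialize (H2 t ltac:(lra)). lra.
Qed.

Lemma BO_scal (F : R -> C) (k : C) K : bigO F K -> bigO (fun t => k * F t)%C K.
Proof.
  intros [C1 [d1 [Hd1 H1]]]. exists (Cmod k * C1), d1. split; auto. intros t Ht.
  rewrite Cmod_mult, Rmult_assoc. apply Rmult_le_compat_l; [apply Cmod_ge_0| auto].
Qed.

Lemma BO_opp (F : R -> C) K : bigO F K -> bigO (fun t => - F t)%C K.
Proof.
  intros H. apply (BO_ext_all _ (fun t => (-1) * F t)%C); [intros; ring|]. apply BO_scal; auto.
Qed.

Lemma BO_minus (F G : R -> C) K : bigO F K -> bigO G K -> bigO (fun t => F t - G t)%C K.
Proof. intros HF HG. apply BO_plus; auto. apply BO_opp; auto. Qed.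

Lemma pow_le_mono_small (t : R) K K' : 0 <= t <= 1 -> (K' <= K)%nat -> t ^ K <= t ^ K'.
Proof.
  intros Ht HK. replace K with (K' + (K - K'))%nat by lia.
  generalize (K - K')%nat as d. intros d. induction d as [|d IH].
  - rewrite Nat.add_0_r. lra.
  - rewrite Nat.add_succ_r. simpl. assert (0 <= t ^ (K' + d)) by (apply pow_le; lra). nra.
Qed.

Lemma BO_mono (F : R -> C) K K' : (K' <= K)%nat -> bigO F K -> bigO F K'.
Proof.
  intros HK [C1 [d1 [Hd1 H1]]]. exists (Rabs C1), (Rmin d1 1).
  split; [apply Rmin_pos; lra|]. intros t Ht.
  assert (t < d1) by (eapply Rlt_le_trans; [apply Ht| apply Rmin_l]).
  assert (t < 1) by (eapply Rlt_le_trans; [apply Ht| apply Rmin_r]).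
  eapply Rle_trans; [apply H1; lra|].
  assert (t ^ K <= t ^ K') by (apply pow_le_mono_small; [lra| lia]).
  assert (0 <= t ^ K) by (apply pow_le; lra).
  pose proof (Rle_abs C1). apply Rle_trans with (Rabs C1 * t ^ K).
  - apply Rmult_le_compat_r; lra.
  - apply Rmult_le_compat_l; [apply Rabs_pos| lra].
Qed.

Lemma BO_mul (F G : R -> C) K1 K2 : bigO F K1 -> bigO G K2 -> bigO (fun t => F t * G t)%C (K1 + K2).
Proof.
  intros [C1 [d1 [Hd1 H1]]] [C2 [d2 [Hd2 H2]]]. exists (C1 * C2), (Rmin d1 d2).
  split; [apply Rmin_pos; auto|]. intros t Ht.
  assert (t < d1) by (eapply Rlt_le_trans; [apply Ht| apply Rmin_l]).
  assert (t < d2) by (eapply Rlt_le_trans; [apply Ht| apply Rmin_r]).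
  specialize (H1 t ltac:(lra)). specialize (H2 t ltac:(lra)).
  rewrite Cmod_mult, pow_add.
  replace (C1 * C2 * (t ^ K1 * t ^ K2)) with ((C1 * t ^ K1) * (C2 * t ^ K2)) by ring.
  apply Rmult_le_compat; auto; apply Cmod_ge_0.
Qed.

Lemma BO_tpow K : bigO (fun t => Cpow (RtoC t) K) K.
Proof.
  exists 1, 1. split; [lra|]. intros t Ht. rewrite Cmod_pow, Cmod_RtoC_pos by lra. lra.
Qed.

Lemma BO_monom (k : C) K : bigO (fun t => k * Cpow (RtoC t) K)%C K.
Proof. apply BO_scal, BO_tpow. Qed.

Lemma BO_monom_mono (k : C) K K' : (K' <= K)%nat -> bigO (fun t => k * Cpow (RtoC t) K)%C K'.
Proof. intros H. eapply BO_mono; [exact H| apply BO_monom]. Qed.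

Lemma BO_zero (F : R -> C) K : bigO F K -> bigO F K.
Proof. auto. Qed.

Lemma BO_coef0 (k : C) K : bigO (fun t => k * Cpow (RtoC t) K)%C (S K) -> k = 0%C.
Proof.
  intros [C1 [d1 [Hd1 H1]]].
  destruct (Req_dec (Cmod k) 0) as [E|E]; [apply Cmod_eq_0; auto|].
  exfalso. pose proof (Cmod_ge_0 k).
  set (t := Rmin (d1 / 2) (Cmod k / (2 * (Rabs C1 + 1)))).
  assert (Ht : 0 < t).
  { unfold t. apply Rmin_pos; [lra|]. apply Rmult_lt_0_compat; [lra|].
    apply Rinv_0_lt_compat. pose proof (Rabs_pos C1). lra. }
  assert (Ht1 : t < d1) by (unfold t; eapply Rle_lt_trans; [apply Rmin_l| lra]).
  assert (Ht2 : t <= Cmod k / (2 * (Rabs C1 + 1))) by apply Rmin_r.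
  specialize (H1 t ltac:(lra)).
  rewrite Cmod_mult, Cmod_pow, Cmod_RtoC_pos in H1 by lra.
  simpl pow in H1.
  assert (Htk : 0 < t ^ K) by (apply pow_lt; lra).
  assert (Cmod k <= C1 * t) by (apply (Rmult_le_reg_r (t ^ K)); [lra| nra]).
  pose proof (Rle_abs C1). pose proof (Rabs_pos C1).
  assert (C1 * t <= Rabs C1 * t) by (apply Rmult_le_compat_r; lra).
  assert (Rabs C1 * t <= Rabs C1 * (Cmod k / (2 * (Rabs C1 + 1)))) by (apply Rmult_le_compat_l; lra).
  assert (Rabs C1 * (Cmod k / (2 * (Rabs C1 + 1))) < Cmod k).
  { apply (Rmult_lt_reg_r (2 * (Rabs C1 + 1))); [lra|].
    replace (Rabs C1 * (Cmod k / (2 * (Rabs C1 + 1))) * (2 * (Rabs C1 + 1))) with (Rabs C1 * Cmod k) by (field; lra).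
    assert (0 < Cmod k) by lra. nra. }
  lra.
Qed.

Lemma BO_small (F : R -> C) : bigO F 2 -> exists d, 0 < d /\ forall t, 0 < t < d -> Cmod (F t) <= t.
Proof.
  intros [C1 [d1 [Hd1 H1]]]. exists (Rmin d1 (/ (Rabs C1 + 1))). split.
  - apply Rmin_pos; auto. apply Rinv_0_lt_compat. pose proof (Rabs_pos C1). lra.
  - intros t Ht.
    assert (t < d1) by (eapply Rlt_le_trans; [apply Ht| apply Rmin_l]).
    assert (t < / (Rabs C1 + 1)) by (eapply Rlt_le_trans; [apply Ht| apply Rmin_r]).
    specialize (H1 t ltac:(lra)). pose proof (Rle_abs C1). pose proof (Rabs_pos C1).
    assert (t * (Rabs C1 + 1) < 1).
    { apply (Rmult_lt_compat_r (Rabs C1 + 1)) in H0; [| lra]. rewrite Rinv_l in H0; lra. }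
    simpl in H1. nra.
Qed.


Lemma powdiff (K : nat) (x y : C) (R : R) : 0 <= R -> Cmod x <= R -> Cmod y <= R ->
  Cmod (Cpow x (S K) - Cpow y (S K))%C <= INR (S K) * R ^ K * Cmod (x - y)%C.
Proof.
  intros HR Hx Hy. induction K as [|K IH].
  - simpl. replace (x * 1 - y * 1)%C with (x - y)%C by ring. lra.
  - replace (Cpow x (S (S K)) - Cpow y (S (S K)))%C with
      (x * (Cpow x (S K) - Cpow y (S K)) + (x - y) * Cpow y (S K))%C by (simpl; ring).
    eapply Rle_trans; [apply Cmod_triangle|]. rewrite !Cmod_mult, Cmod_pow.
    assert (Hyk : Cmod y ^ S K <= R ^ S K) by (apply pow_incr; split; [apply Cmod_ge_0| auto]).
    pose proof (Cmod_ge_0 (x - y)%C). pose proof (Cmod_ge_0 x).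
    assert (0 <= INR (S K) * R ^ K * Cmod (x - y)%C) by (apply Rmult_le_pos; [apply Rmult_le_pos; [apply pos_INR| apply pow_le; lra]| lra]).
    assert (Cmod x * Cmod (Cpow x (S K) - Cpow y (S K))%C <= R * (INR (S K) * R ^ K * Cmod (x - y)%C))
      by (apply Rmult_le_compat; auto; apply Cmod_ge_0).
    assert (Cmod (x - y)%C * Cmod y ^ S K <= Cmod (x - y)%C * R ^ S K) by (apply Rmult_le_compat_l; auto).
    rewrite (S_INR (S K)). simpl pow in *. nra.
Qed.

Lemma E_bound (n : nat) (x y : C) (R : R) : 0 <= R -> Cmod x <= R -> Cmod y <= R ->
  Cmod (Cpow x (S (S n)) - Cpow y (S (S n)) - RtoC (INR (S (S n))) * Cpow y (S n) * (x - y))%C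
    <= INR (S (S n)) ^ 2 * R ^ n * Cmod (x - y)%C ^ 2.
Proof.
  intros HR Hx Hy. induction n as [|n IH].
  - replace (Cpow x 2 - Cpow y 2 - RtoC (INR 2) * Cpow y 1 * (x - y))%C with ((x - y) * (x - y))%C
      by (simpl; replace (INR 2) with 2 by (simpl; ring); rewrite RtoC_plus; ring).
    rewrite Cmod_mult. simpl. nra.
  - replace (Cpow x (S (S (S n))) - Cpow y (S (S (S n))) - RtoC (INR (S (S (S n)))) * Cpow y (S (S n)) * (x - y))%C
      with (x * (Cpow x (S (S n)) - Cpow y (S (S n)) - RtoC (INR (S (S n))) * Cpow y (S n) * (x - y))
            + RtoC (INR (S (S n))) * Cpow y (S n) * ((x - y) * (x - y)))%C
      by (rewrite (S_INR (S (S n))), RtoC_plus; simpl; ring).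
    eapply Rle_trans; [apply Cmod_triangle|]. rewrite !Cmod_mult, Cmod_pow, Cmod_RtoC_pos by apply pos_INR.
    set (d := Cmod (x - y)%C). set (N2 := INR (S (S n))).
    assert (HN2 : 0 <= N2) by apply pos_INR.
    assert (Hyk : Cmod y ^ S n <= R ^ S n) by (apply pow_incr; split; [apply Cmod_ge_0| auto]).
    pose proof (Cmod_ge_0 (x - y)%C). fold d in H. pose proof (Cmod_ge_0 x).
    set (E := Cmod (Cpow x (S (S n)) - Cpow y (S (S n)) - RtoC N2 * Cpow y (S n) * (x - y))%C) in *.
    assert (0 <= E) by apply Cmod_ge_0.
    assert (Cmod x * E <= R * (N2 ^ 2 * R ^ n * d ^ 2)) by (apply Rmult_le_compat; auto).
    assert (0 <= R ^ S n) by (apply pow_le; lra).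
    assert (N2 * Cmod y ^ S n * (d * d) <= N2 * R ^ S n * (d * d)).
    { apply Rmult_le_compat_r; [nra|]. apply Rmult_le_compat_l; auto. }
    rewrite (S_INR (S (S n))). fold N2. simpl pow in *.
    assert (0 <= R * R ^ n) by (apply Rmult_le_pos; [lra| apply pow_le; lra]).
    assert (0 <= R * R ^ n * (d * d)) by (apply Rmult_le_pos; nra).
    nra.
Qed.

Lemma tail_w (c : nat -> C) : analytic_U c -> forall L, exists C, 0 <= C /\ forall w, Cmod w <= 1/2 ->
  Cmod (psum c w - psa (fun n => c n * Cpow w n)%C L)%C <= C * Cmod w ^ L.
Proof.
  intros Ha L. destruct (coef_bound c Ha (3/4)) as [M [HM0 HM]]; [lra|].
  exists (3 * M * (4/3) ^ L). split; [apply Rmult_le_pos; [lra| apply pow_le; lra]|].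
  intros w Hw.
  assert (Hin : inU w) by (unfold inU; lra).
  set (q := Cmod w * (4/3)). pose proof (Cmod_ge_0 w).
  assert (Hq : 0 <= q <= 2/3) by (unfold q; lra).
  eapply Rle_trans; [apply (tail_bound _ _ M q L (psum_series c w Ha Hin)); [lra|]|].
  - intros n. rewrite Cmod_mult, Cmod_pow. specialize (HM n).
    replace (Cmod w) with ((3/4) * q) by (unfold q; field).
    rewrite Rpow_mult_distr, <- Rmult_assoc. apply Rmult_le_compat_r; [apply pow_le; lra| auto].
  - unfold q. rewrite Rpow_mult_distr.
    assert (0 <= Cmod w ^ L * (4/3) ^ L) by (apply Rmult_le_pos; apply pow_le; lra).
    assert (M * (Cmod w ^ L * (4/3) ^ L) / (1 - Cmod w * (4/3)) <= 3 * (M * (Cmod w ^ L * (4/3) ^ L))).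
    { apply (Rmult_le_reg_r (1 - Cmod w * (4/3))); [lra|].
      replace (M * (Cmod w ^ L * (4 / 3) ^ L) / (1 - Cmod w * (4 / 3)) * (1 - Cmod w * (4 / 3)))
        with (M * (Cmod w ^ L * (4 / 3) ^ L)) by (field; lra).
      assert (0 <= M * (Cmod w ^ L * (4/3) ^ L)) by (apply Rmult_le_pos; lra). nra. }
    replace (3 * M * (4 / 3) ^ L * Cmod w ^ L) with (3 * (M * (Cmod w ^ L * (4/3) ^ L))) by ring.
    replace (M * (Cmod w ^ L * (4 / 3) ^ L) / (1 - Cmod w * (4 / 3))) with
      (M * (Cmod w ^ L * (4 / 3) ^ L) / (1 - Cmod w * (4 / 3))) by ring.
    lra.
Qed.


Definition Setup (m : nat) (a b : nat -> C) : Prop :=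
  (1 <= m)%nat /\ analytic_U a /\ a 0%nat = 0%C /\ a 1%nat = 1%C /\
  (forall n, a n <> 0%C -> exists k, n = (m * k + 1)%nat) /\ analytic_U b /\
  (forall z, inU z -> inU (psum a z) -> psum b (psum a z) = z).

Definition T (t : R) : C := RtoC t.

Lemma a_pointwise (m : nat) (a : nat -> C) (w : C) (n : nat) : (1 <= m)%nat -> a 0%nat = 0%C -> a 1%nat = 1%C ->
  (forall n, a n <> 0%C -> exists k, n = (m * k + 1)%nat) -> (n < 2 * m + 2)%nat ->
  (a n * Cpow w n)%C =
   ((if Nat.eqb n 1 then w else 0%C) + (if Nat.eqb n (m + 1) then a (m + 1)%nat * Cpow w (m + 1) else 0%C)
    + (if Nat.eqb n (2 * m + 1) then a (2 * m + 1)%nat * Cpow w (2 * m + 1) else 0%C))%C.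
Proof.
  intros Hm Ha0 Ha1 Hsp Hn.
  destruct (Nat.eqb_spec n 1) as [E1|E1];
  destruct (Nat.eqb_spec n (m + 1)) as [E2|E2];
  destruct (Nat.eqb_spec n (2 * m + 1)) as [E3|E3]; try lia.
  - subst. rewrite Ha1. simpl. try ring.
  - subst. ring.
  - subst. ring.
  - destruct (classic (a n = 0%C)) as [Z|Z].
    + rewrite Z. ring.
    + exfalso. destruct (Hsp n Z) as [k Hk]. subst n.
      destruct k as [|[|[|k]]]; try lia; nia.
Qed.

Lemma psa_a (m : nat) (a : nat -> C) (w : C) : (1 <= m)%nat -> a 0%nat = 0%C -> a 1%nat = 1%C ->
  (forall n, a n <> 0%C -> exists k, n = (m * k + 1)%nat) ->
  psa (fun n => a n * Cpow w n)%C (2 * m + 2) =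
  (w + a (m + 1)%nat * Cpow w (m + 1) + a (2 * m + 1)%nat * Cpow w (2 * m + 1))%C.
Proof.
  intros Hm Ha0 Ha1 Hsp.
  rewrite (psa_ext _ (fun n => ((if Nat.eqb n 1 then w else 0%C) + (if Nat.eqb n (m + 1) then a (m + 1)%nat * Cpow w (m + 1) else 0%C)
    + (if Nat.eqb n (2 * m + 1) then a (2 * m + 1)%nat * Cpow w (2 * m + 1) else 0%C))%C)).
  2:{ intros j Hj. apply a_pointwise; auto. }
  rewrite <- !psa_plus.
  rewrite (psa_single (fun n => if Nat.eqb n 1 then w else 0%C) _ 1); [| lia | intros l _ Hl; destruct (Nat.eqb_spec l 1); [lia| reflexivity]].
  rewrite (psa_single (fun n => if Nat.eqb n (m + 1) then _ else 0%C) _ (m + 1)); [| lia | intros l _ Hl; destruct (Nat.eqb_spec l (m + 1)); [lia| reflexivity]].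
  rewrite (psa_single (fun n => if Nat.eqb n (2 * m + 1) then _ else 0%C) _ (2 * m + 1)); [| lia | intros l _ Hl; destruct (Nat.eqb_spec l (2 * m + 1)); [lia| reflexivity]].
  rewrite !Nat.eqb_refl. reflexivity.
Qed.


Lemma F1 (m : nat) (a b : nat -> C) : Setup m a b ->
  bigO (fun t => psum a (T t) - (T t + a (m + 1)%nat * Cpow (T t) (m + 1) + a (2 * m + 1)%nat * Cpow (T t) (2 * m + 1)))%C (2 * m + 2).
Proof.
  intros (Hm & Ha & Ha0 & Ha1 & Hsp & Hb & Hinv).
  destruct (tail_w a Ha (2 * m + 2)) as [CC [HC HCw]].
  exists CC, (1/2). split; [lra|]. intros t Ht.
  rewrite <- (psa_a m a (T t)) by auto.
  assert (Cmod (T t) = t) by (unfold T; apply Cmod_RtoC_pos; lra).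
  replace (t ^ (2 * m + 2)) with (Cmod (T t) ^ (2 * m + 2)) by (rewrite H; reflexivity).
  apply HCw. rewrite H; lra.
Qed.

Lemma D1 (m : nat) (a b : nat -> C) : Setup m a b -> bigO (fun t => psum a (T t) - T t)%C (m + 1).
Proof.
  intros HS. pose proof (F1 m a b HS) as H. destruct HS as (Hm & _).
  apply (BO_ext_all _ (fun t => ((psum a (T t) - (T t + a (m + 1)%nat * Cpow (T t) (m + 1) + a (2 * m + 1)%nat * Cpow (T t) (2 * m + 1)))
     + a (m + 1)%nat * Cpow (T t) (m + 1) + a (2 * m + 1)%nat * Cpow (T t) (2 * m + 1))%C)).
  { intros t. ring. }
  apply BO_plus; [apply BO_plus|].
  - eapply BO_mono; [| exact H]. lia.
  - apply BO_monom.
  - apply BO_monom_mono. lia.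
Qed.

Lemma D2 (m : nat) (a b : nat -> C) : Setup m a b -> bigO (fun t => psum a (T t) - T t - a (m + 1)%nat * Cpow (T t) (m + 1))%C (2 * m + 1).
Proof.
  intros HS. pose proof (F1 m a b HS) as H. destruct HS as (Hm & _).
  apply (BO_ext_all _ (fun t => ((psum a (T t) - (T t + a (m + 1)%nat * Cpow (T t) (m + 1) + a (2 * m + 1)%nat * Cpow (T t) (2 * m + 1)))
     + a (2 * m + 1)%nat * Cpow (T t) (2 * m + 1))%C)).
  { intros t. ring. }
  apply BO_plus.
  - eapply BO_mono; [| exact H]. lia.
  - apply BO_monom.
Qed.

Lemma f_small (m : nat) (a b : nat -> C) : Setup m a b -> exists d, 0 < d /\ forall t, 0 < t < d -> Cmod (psum a (T t)) <= 2 * t.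
Proof.
  intros HS. pose proof (D1 m a b HS) as H. destruct HS as (Hm & _).
  destruct (BO_small (fun t => psum a (T t) - T t)%C) as [d [Hd Hd']].
  { eapply BO_mono; [| exact H]. lia. }
  exists d. split; auto. intros t Ht. specialize (Hd' t Ht).
  replace (psum a (T t)) with ((psum a (T t) - T t) + T t)%C by ring.
  eapply Rle_trans; [apply Cmod_triangle|].
  assert (Cmod (T t) = t) by (unfold T; apply Cmod_RtoC_pos; lra). lra.
Qed.

Lemma F3 (m : nat) (a b : nat -> C) : Setup m a b ->
  bigO (fun t => Cpow (psum a (T t)) (m + 1) - Cpow (T t) (m + 1)
                 - RtoC (INR (m + 1)) * a (m + 1)%nat * Cpow (T t) (2 * m + 1))%C (2 * m + 2).
Proof.
  intros HS. pose proof (D1 m a b HS) as HD1. pose proof (D2 m a b HS) as HD2.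
  destruct (f_small m a b HS) as [d [Hd Hfs]].
  destruct HS as (Hm & _).
  destruct m as [|m']; [lia|].
  set (f := fun t => psum a (T t)) in *.
  apply (BO_ext_all _ (fun t => (
     (Cpow (f t) (S (S m')) - Cpow (T t) (S (S m')) - RtoC (INR (S (S m'))) * Cpow (T t) (S m') * (f t - T t))
     + RtoC (INR (S m' + 1)) * Cpow (T t) (S m') * (f t - T t - a (S m' + 1)%nat * Cpow (T t) (S m' + 1)))%C)).
  { intros t. replace (S m' + 1)%nat with (S (S m')) by lia.
    replace (2 * S m' + 1)%nat with (S m' + S (S m'))%nat by lia. rewrite Cpow_add_r. unfold f. ring. }
  apply BO_plus.
  - apply (BO_bound _ (fun t => (RtoC (INR (S (S m')) ^ 2 * 2 ^ m') * Cpow (T t) m') * ((f t - T t) * (f t - T t)))%C _ d Hd).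
    + intros t Ht.
      assert (HT : Cmod (T t) = t) by (unfold T; apply Cmod_RtoC_pos; lra).
      eapply Rle_trans; [apply (E_bound m' (f t) (T t) (2 * t)); try lra; [apply Hfs; auto]|].
      rewrite !Cmod_mult, Cmod_pow, HT, Cmod_RtoC_pos.
      * rewrite Rpow_mult_distr. simpl pow. right. ring.
      * apply Rmult_le_pos; apply pow_le; [apply pos_INR| lra].
    + eapply BO_mono; [| apply BO_mul; [apply BO_monom| apply BO_mul; [exact HD1| exact HD1]]]. lia.
  - eapply BO_mono; [| apply BO_mul; [apply BO_monom| exact HD2]]. lia.
Qed.


Definition beta_c (m : nat) (al : C) (n : nat) : C :=
  if Nat.eqb n 1 then 1%C else if Nat.eqb n (m + 1) then (- al)%C else 0%C.

Lemma psa_beta (m : nat) (al w : C) (K : nat) : (1 <= m)%nat ->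
  psa (fun n => beta_c m al n * Cpow w n)%C K =
  ((if Nat.ltb 1 K then w else 0%C) + (if Nat.ltb (m + 1) K then - al * Cpow w (m + 1) else 0%C))%C.
Proof.
  intros Hm. induction K as [|K IH].
  - simpl. ring.
  - change (psa (fun n => beta_c m al n * Cpow w n)%C K + beta_c m al K * Cpow w K =
      ((if Nat.ltb 1 (S K) then w else 0%C) + (if Nat.ltb (m + 1) (S K) then - al * Cpow w (m + 1) else 0%C)))%C.
    rewrite IH. unfold beta_c.
    destruct (Nat.eqb_spec K 1); destruct (Nat.eqb_spec K (m + 1));
    destruct (Nat.ltb_spec 1 K); destruct (Nat.ltb_spec 1 (S K));
    destruct (Nat.ltb_spec (m + 1) K); destruct (Nat.ltb_spec (m + 1) (S K)); try lia;
    try (subst; simpl; ring); ring.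
Qed.

Lemma R_tail (m : nat) (a b : nat -> C) : Setup m a b -> forall K,
  bigO (fun t => psum b (psum a (T t)) - psa (fun n => b n * Cpow (psum a (T t)) n) (S K))%C (S K).
Proof.
  intros HS K. destruct (f_small m a b HS) as [d [Hd Hfs]].
  destruct HS as (Hm & Ha & Ha0 & Ha1 & Hsp & Hb & Hinv).
  destruct (tail_w b Hb (S K)) as [CC [HC HCw]].
  exists (CC * 2 ^ S K), (Rmin d (1/4)). split; [apply Rmin_pos; lra|].
  intros t Ht.
  assert (t < d) by (eapply Rlt_le_trans; [apply Ht| apply Rmin_l]).
  assert (t < 1/4) by (eapply Rlt_le_trans; [apply Ht| apply Rmin_r]).
  specialize (Hfs t ltac:(lra)).
  eapply Rle_trans; [apply HCw; lra|].
  rewrite Rmult_assoc, <- Rpow_mult_distr. apply Rmult_le_compat_l; auto.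
  apply pow_incr. split; [apply Cmod_ge_0| lra].
Qed.

Lemma powdiff_O (m : nat) (a b : nat -> C) : Setup m a b -> forall K,
  bigO (fun t => Cpow (T t) K - Cpow (psum a (T t)) K)%C (S K).
Proof.
  intros HS K. pose proof (D1 m a b HS) as HD1.
  destruct (f_small m a b HS) as [d [Hd Hfs]].
  destruct HS as (Hm & _).
  destruct K as [|j].
  - apply (BO_ext_all _ (fun t => 0 * Cpow (T t) 1)%C); [intros; simpl; ring| apply BO_monom].
  - apply (BO_bound _ (fun t => RtoC (INR (S j) * 2 ^ j) * Cpow (T t) j * (psum a (T t) - T t))%C _ d Hd).
    + intros t Ht.
      assert (HT : Cmod (T t) = t) by (unfold T; apply Cmod_RtoC_pos; lra).
      replace (Cpow (T t) (S j) - Cpow (psum a (T t)) (S j))%C with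
        (- (Cpow (psum a (T t)) (S j) - Cpow (T t) (S j)))%C by ring.
      rewrite Cmod_opp.
      eapply Rle_trans; [apply (powdiff j (psum a (T t)) (T t) (2 * t)); try lra; apply Hfs; auto|].
      rewrite !Cmod_mult, Cmod_pow, HT, Cmod_RtoC_pos.
      * rewrite Rpow_mult_distr. right. ring.
      * apply Rmult_le_pos; [apply pos_INR| apply pow_le; lra].
    + eapply BO_mono; [| apply BO_mul; [apply BO_monom| exact HD1]]. lia.
Qed.

Lemma step_O (m : nat) (a b : nat -> C) : Setup m a b -> forall K,
  (forall n, (n < K)%nat -> b n = beta_c m (a (m + 1)%nat) n) ->
  bigO (fun t => b K * Cpow (T t) K - (T t - psa (fun n => beta_c m (a (m + 1)%nat) n * Cpow (psum a (T t)) n) K))%C (S K).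
Proof.
  intros HS K IH.
  pose proof (R_tail m a b HS K) as HR. pose proof (powdiff_O m a b HS K) as HP.
  destruct (f_small m a b HS) as [d [Hd Hfs]].
  destruct HS as (Hm & Ha & Ha0 & Ha1 & Hsp & Hb & Hinv).
  apply (BO_ext _ (fun t => b K * (Cpow (T t) K - Cpow (psum a (T t)) K)
            - (psum b (psum a (T t)) - psa (fun n => b n * Cpow (psum a (T t)) n) (S K)))%C _ (Rmin d (1/4))).
  - apply Rmin_pos; lra.
  - intros t Ht.
    assert (t < d) by (eapply Rlt_le_trans; [apply Ht| apply Rmin_l]).
    assert (t < 1/4) by (eapply Rlt_le_trans; [apply Ht| apply Rmin_r]).
    specialize (Hfs t ltac:(lra)).
    assert (HT : Cmod (T t) = t) by (unfold T; apply Cmod_RtoC_pos; lra).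
    rewrite (Hinv (T t)) by (unfold inU; lra).
    change (psa (fun n => b n * Cpow (psum a (T t)) n)%C (S K)) with
      (psa (fun n => b n * Cpow (psum a (T t)) n)%C K + b K * Cpow (psum a (T t)) K)%C.
    rewrite (psa_ext (fun n => b n * Cpow (psum a (T t)) n)%C (fun n => beta_c m (a (m + 1)%nat) n * Cpow (psum a (T t)) n)%C K)
      by (intros n Hn; rewrite IH by auto; reflexivity).
    ring.
  - apply BO_minus; [apply BO_scal; exact HP| exact HR].
Qed.

Definition e_c (m : nat) (a : nat -> C) (K : nat) : C :=
  if Nat.eqb K (2 * m + 1) then (RtoC (INR (m + 1)) * a (m + 1)%nat * a (m + 1)%nat - a (2 * m + 1)%nat)%C
  else beta_c m (a (m + 1)%nat) K.

Lemma Q_O (m : nat) (a b : nat -> C) : Setup m a b -> forall K, (K <= 2 * m + 1)%nat ->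
  bigO (fun t => T t - psa (fun n => beta_c m (a (m + 1)%nat) n * Cpow (psum a (T t)) n) K - e_c m a K * Cpow (T t) K)%C (S K).
Proof.
  intros HS K HK.
  pose proof (F1 m a b HS) as HF1. pose proof (D1 m a b HS) as HD1.
  pose proof (D2 m a b HS) as HD2. pose proof (F3 m a b HS) as HF3.
  destruct HS as (Hm & _).
  set (al := a (m + 1)%nat). set (ga := a (2 * m + 1)%nat).
  apply (BO_ext_all _ (fun t => T t - ((if Nat.ltb 1 K then psum a (T t) else 0%C) +
        (if Nat.ltb (m + 1) K then - al * Cpow (psum a (T t)) (m + 1) else 0%C)) - e_c m a K * Cpow (T t) K)%C).
  { intros t. rewrite psa_beta by auto. reflexivity. }
  unfold e_c, beta_c. fold al ga.
  destruct (Nat.eqb_spec K 0) as [E0|E0].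
  { subst K. destruct (Nat.eqb_spec 0 (2 * m + 1)); [lia|]. destruct (Nat.eqb_spec 0 1); [lia|].
    destruct (Nat.eqb_spec 0 (m + 1)); [lia|]. destruct (Nat.ltb_spec 1 0); [lia|].
    destruct (Nat.ltb_spec (m + 1) 0); [lia|].
    apply (BO_ext_all _ (fun t => 1 * Cpow (T t) 1)%C); [intros; simpl; ring| apply BO_monom]. }
  destruct (Nat.eqb_spec K 1) as [E1|E1].
  { subst K. destruct (Nat.eqb_spec 1 (2 * m + 1)); [lia|]. destruct (Nat.eqb_spec 1 1); [|lia].
    destruct (Nat.ltb_spec 1 1); [lia|].
    destruct (Nat.ltb_spec (m + 1) 1); [lia|].
    apply (BO_ext_all _ (fun t => 0 * Cpow (T t) 2)%C); [intros; simpl; ring| apply BO_monom]. }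
  destruct (Nat.ltb_spec 1 K); [|lia].
  destruct (Nat.eqb_spec K (2 * m + 1)) as [E3|E3].
  {
    destruct (Nat.ltb_spec (m + 1) K); [|lia]. subst K.
    apply (BO_ext_all _ (fun t => - (psum a (T t) - (T t + al * Cpow (T t) (m + 1) + ga * Cpow (T t) (2 * m + 1)))
              + al * (Cpow (psum a (T t)) (m + 1) - Cpow (T t) (m + 1) - RtoC (INR (m + 1)) * al * Cpow (T t) (2 * m + 1)))%C).
    { intros t. ring. }
    replace (S (2 * m + 1)) with (2 * m + 2)%nat by lia.
    apply BO_plus; [apply BO_opp; exact HF1| apply BO_scal; exact HF3]. }
  destruct (Nat.eqb_spec K (m + 1)) as [E2|E2].
  { destruct (Nat.ltb_spec (m + 1) K); [lia|]. subst K.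
    apply (BO_ext_all _ (fun t => - (psum a (T t) - T t - al * Cpow (T t) (m + 1)))%C).
    { intros t. ring. }
    apply BO_opp. eapply BO_mono; [| exact HD2]. lia. }
  destruct (Nat.ltb_spec (m + 1) K).
  { (* m+2 <= K <= 2m *)
    apply (BO_ext_all _ (fun t => (- (psum a (T t) - (T t + al * Cpow (T t) (m + 1) + ga * Cpow (T t) (2 * m + 1)))
              + al * (Cpow (psum a (T t)) (m + 1) - Cpow (T t) (m + 1) - RtoC (INR (m + 1)) * al * Cpow (T t) (2 * m + 1)))
              + (RtoC (INR (m + 1)) * al * al - ga) * Cpow (T t) (2 * m + 1))%C).
    { intros t. ring. }
    eapply BO_mono with (K := (2 * m + 1)%nat); [lia|].
    apply BO_plus; [| apply BO_monom].
    eapply BO_mono; [| apply BO_plus; [apply BO_opp; exact HF1| apply BO_scal; exact HF3]]. lia. }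
  { (* 2 <= K <= m *)
    apply (BO_ext_all _ (fun t => - (psum a (T t) - T t))%C).
    { intros t. ring. }
    apply BO_opp. eapply BO_mono; [| exact HD1]. lia. }
Qed.

Lemma coef_eq (m : nat) (a b : nat -> C) : Setup m a b -> forall K, (K <= 2 * m + 1)%nat ->
  (forall n, (n < K)%nat -> b n = beta_c m (a (m + 1)%nat) n) -> b K = e_c m a K.
Proof.
  intros HS K HK IH.
  pose proof (step_O m a b HS K IH) as H1. pose proof (Q_O m a b HS K HK) as H2.
  assert (H := BO_plus _ _ _ H1 H2).
  assert (H' : bigO (fun t => (b K - e_c m a K) * Cpow (T t) K)%C (S K)).
  { eapply BO_ext_all; [| exact H]. intros t. cbv beta. ring. }
  apply BO_coef0 in H'.
  replace (b K) with ((b K - e_c m a K) + e_c m a K)%C by ring. rewrite H'. ring.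
Qed.

Lemma inverse_coefs (m : nat) (a b : nat -> C) : Setup m a b ->
  b 1%nat = 1%C /\ b (2 * m + 1)%nat = (RtoC (INR (m + 1)) * a (m + 1)%nat * a (m + 1)%nat - a (2 * m + 1)%nat)%C.
Proof.
  intros HS. assert (Hm : (1 <= m)%nat) by (destruct HS; auto).
  assert (All : forall N K, (K < N)%nat -> (K <= 2 * m)%nat -> b K = beta_c m (a (m + 1)%nat) K).
  { induction N as [|N IHN]; intros K HKN HK; [lia|].
    destruct (Nat.lt_ge_cases K N) as [HKN'|HKN']; [apply IHN; auto|].
    assert (K = N) by lia. subst K.
    rewrite (coef_eq m a b HS N) by (lia || (intros n Hn; apply IHN; lia)).
    unfold e_c. destruct (Nat.eqb_spec N (2 * m + 1)); [lia| reflexivity]. }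
  split.
  - rewrite (All 2%nat 1%nat) by lia. unfold beta_c. simpl. reflexivity.
  - rewrite (coef_eq m a b HS (2 * m + 1)) by (lia || (intros n Hn; apply (All (2 * m + 1)%nat); lia)).
    unfold e_c. rewrite Nat.eqb_refl. reflexivity.
Qed.


Lemma J_bound (m : nat) (tau : C) (lam beta : R) (c : nat -> C) :
  analytic_U c -> c 1%nat = 1%C -> tau <> 0%C -> 0 <= lam ->
  (forall z, inU z -> beta < Re (Jfun m tau lam 0 0 c z)) ->
  forall n, (1 <= n)%nat -> (1 + INR n * lam) * Cmod (c (S n)) <= 2 * Cmod tau * (1 - beta).
Proof.
  intros Ha Hc1 Htau Hlam HJ n Hn.
  set (e := eJ tau lam beta c).
  assert (He : analytic_U e).
  { intros z Hz. exists (Jfun m tau lam 0 0 c z - RtoC beta)%C. apply J_series; auto. }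
  assert (Hpos : forall z, inU z -> 0 < Re (psum e z)).
  { intros z Hz. unfold psum, e. rewrite (Csum_eq _ _ (J_series m tau lam beta c Ha z Hz)).
    specialize (HJ z Hz).
    assert (ER : forall X b, Re (X - RtoC b)%C = Re X - b).
    { intros [x y] b0. unfold Cminus, Cplus, Copp, Re, RtoC. simpl. ring. }
    rewrite ER. lra. }
  pose proof (cara e He Hpos n Hn) as H.
  assert (E0 : e 0%nat = RtoC (1 - beta)).
  { unfold e, eJ. rewrite Hc1. rewrite RtoC_minus. ring. }
  rewrite E0 in H. simpl Re in H.
  destruct n as [|n']; [lia|].
  unfold e, eJ in H.
  rewrite !Cmod_mult, Cmod_inv, Cmod_R, Rabs_pos_eq in H by (auto || (assert (0 <= INR (S n')) by apply pos_INR; nra)).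
  assert (Ht : 0 < Cmod tau) by (apply Cmod_gt_0; auto).
  apply (Rmult_le_compat_l (Cmod tau)) in H; [| lra].
  replace (Cmod tau * (/ Cmod tau * (1 + INR (S n') * lam) * Cmod (c (S (S n')))))
    with ((1 + INR (S n') * lam) * Cmod (c (S (S n')))) in H by (field; lra).
  lra.
Qed.

Theorem corollary2 (m : nat) (lam beta : R) (tau : C) (a : nat -> C) :
  (1 <= m)%nat -> (0 <= lam)%R -> (0 <= beta < 1)%R -> tau <> 0%C ->
  in_Theta m tau lam 0%R 0%nat beta a ->
  (Cmod (a (m + 1)%nat) <=
     Rmin (2 * Cmod tau * (1 - beta) / (1 + INR m * lam))
          (2 * sqrt (Cmod tau * (1 - beta) / ((INR m + 1) * (1 + 2 * INR m * lam)))))%R /\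
  (Cmod (a (2 * m + 1)%nat) <= 2 * Cmod tau * (1 - beta) / (1 + 2 * INR m * lam))%R.
Proof.
  intros Hm Hlam Hbeta Htau [b [HSig [HJa HJb]]].
  destruct HSig as [[Ha [Ha0 [Ha1 Hsp]]] [_ [Hb [_ Hinv]]]].
  assert (HS : Setup m a b) by (repeat split; auto).
  destruct (inverse_coefs m a b HS) as [Hb1 Hb2].
  assert (HmR : 1 <= INR m) by (apply (le_INR 1); lia).
  set (X := Cmod tau * (1 - beta)).
  assert (HX : 0 <= X) by (unfold X; apply Rmult_le_pos; [apply Cmod_ge_0| lra]).
  assert (A1 : (1 + INR m * lam) * Cmod (a (m + 1)%nat) <= 2 * X).
  { pose proof (J_bound m tau lam beta a Ha Ha1 Htau Hlam HJa m Hm) as H.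
    rewrite Nat.add_1_r. unfold X. lra. }
  assert (A2 : (1 + 2 * INR m * lam) * Cmod (a (2 * m + 1)%nat) <= 2 * X).
  { pose proof (J_bound m tau lam beta a Ha Ha1 Htau Hlam HJa (2 * m) ltac:(lia)) as H.
    rewrite mult_INR in H. replace (2 * m + 1)%nat with (S (2 * m)) by lia. unfold X.
    replace (INR 2) with 2 in H by reflexivity. lra. }
  assert (B2 : (1 + 2 * INR m * lam) * Cmod (b (2 * m + 1)%nat) <= 2 * X).
  { pose proof (J_bound m tau lam beta b Hb Hb1 Htau Hlam HJb (2 * m) ltac:(lia)) as H.
    rewrite mult_INR in H. replace (2 * m + 1)%nat with (S (2 * m)) by lia. unfold X.
    replace (INR 2) with 2 in H by reflexivity. lra. }
  assert (P1 : 0 < 1 + INR m * lam) by nra.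
  assert (P2 : 0 < 1 + 2 * INR m * lam) by nra.
  split.
  - apply Rmin_glb.
    + apply (Rmult_le_reg_l (1 + INR m * lam)); [lra|].
      replace ((1 + INR m * lam) * (2 * Cmod tau * (1 - beta) / (1 + INR m * lam))) with (2 * X) by (unfold X; field; lra).
      lra.
    + set (al := a (m + 1)%nat) in *. set (ga := a (2 * m + 1)%nat) in *.
      assert (Hq : (INR m + 1) * (Cmod al * Cmod al) <= Cmod (b (2 * m + 1)%nat) + Cmod ga).
      { rewrite Hb2.
        replace (RtoC (INR (m + 1)) * al * al)%C with ((RtoC (INR (m + 1)) * al * al - ga) + ga)%C by ring.
        eapply Rle_trans; [| apply Rplus_le_compat_r; apply Rle_refl].
        assert (Cmod (RtoC (INR (m + 1)) * al * al)%C = (INR m + 1) * (Cmod al * Cmod al)).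
        { rewrite !Cmod_mult, Cmod_R, Rabs_pos_eq by apply pos_INR. rewrite plus_INR. simpl. ring. }
        rewrite <- H. replace (RtoC (INR (m + 1)) * al * al - ga + ga)%C with (RtoC (INR (m + 1)) * al * al)%C by ring.
        replace (RtoC (INR (m + 1)) * al * al)%C with ((RtoC (INR (m + 1)) * al * al - ga) + ga)%C at 1 by ring.
        apply Cmod_triangle. }
      assert (Hsum : (1 + 2 * INR m * lam) * (Cmod (b (2 * m + 1)%nat) + Cmod ga) <= 4 * X) by lra.
      assert (Hsq : Cmod al * Cmod al <= 4 * (X / ((INR m + 1) * (1 + 2 * INR m * lam)))).
      { apply (Rmult_le_reg_l ((INR m + 1) * (1 + 2 * INR m * lam))); [nra|].
        replace ((INR m + 1) * (1 + 2 * INR m * lam) * (4 * (X / ((INR m + 1) * (1 + 2 * INR m * lam)))))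
          with (4 * X) by (field; nra).
        assert (0 <= Cmod (b (2 * m + 1)%nat) + Cmod ga) by (pose proof (Cmod_ge_0 (b (2 * m + 1)%nat)); pose proof (Cmod_ge_0 ga); lra).
        assert ((1 + 2 * INR m * lam) * ((INR m + 1) * (Cmod al * Cmod al)) <= (1 + 2 * INR m * lam) * (Cmod (b (2 * m + 1)%nat) + Cmod ga))
          by (apply Rmult_le_compat_l; lra).
        nra. }
      fold X.
      assert (HY : 0 <= X / ((INR m + 1) * (1 + 2 * INR m * lam))) by (apply Rmult_le_pos; [lra| left; apply Rinv_0_lt_compat; nra]).
      rewrite <- (sqrt_square (Cmod al)) by apply Cmod_ge_0.
      set (Y := X / ((INR m + 1) * (1 + 2 * INR m * lam))) in *.
      assert (E2 : 2 * sqrt Y = sqrt (4 * Y)).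
      { rewrite sqrt_mult by lra. replace 4 with (2 * 2) by ring. rewrite sqrt_square by lra. reflexivity. }
      rewrite E2.
      apply sqrt_le_1; [apply Rmult_le_pos; apply Cmod_ge_0| apply Rmult_le_pos; lra| lra].
  - apply (Rmult_le_reg_l (1 + 2 * INR m * lam)); [lra|].
    replace ((1 + 2 * INR m * lam) * (2 * Cmod tau * (1 - beta) / (1 + 2 * INR m * lam))) with (2 * X) by (unfold X; field; lra).
    lra.
Qed.
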